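(* (Discrete inf–sup condition.) There is a constant $\beta>0$, independent of the mesh sizes $h$ and $l$, such that for every admissible discrete displacement $\boldsymbol v=(v^x,v^y)$ $$\sup_{\underline\tau\neq 0}\frac{(D_x\tau^{11}+d_y\tau^{12},v^x)_{TM}+(d_x\tau^{12}+D_y\tau^{22},v^y)_{MT}}{\|\underline\tau\|}\ \ge\ \beta\,\|\boldsymbol v\|,$$ where the supremum is over all nonzero discrete stresses $\underline\tau=(\tau^{11},\tau^{22},\tau^{12})$.
   Context: Let $\Omega=(0,a)\times(0,b)$ with grids $0=x_0<x_1<\dots<x_{n_x}=a$ and $0=y_0<\dots<y_{n_y}=b$. Set $x_{i+1/2}=(x_i+x_{i+1})/2$, $h_{i+1/2}=x_{i+1}-x_i$, $h_i=(h_{i-1/2}+h_{i+1/2})/2$ for $1\le i\le n_x-1$, $h_0=h_{1/2}/2$, $h_{n_x}=h_{n_x-1/2}/2$, $h=\max_i h_{i+1/2}$; analogously $y_{j+1/2}$, $l_{j+1/2}=y_{j+1}-y_j$, $l_j=(l_{j-1/2}+l_{j+1/2})/2$ ($1\le j\le n_y-1$), $l_0=l_{1/2}/2$, $l_{n_y}=l_{n_y-1/2}/2$, $l=\max_j l_{j+1/2}$. For a discrete function $\phi$ write $\phi_{\alpha,\beta}=\phi(x_\alpha,y_\beta)$ ($\alpha,\beta$ integers or half-integers). Difference quotients: $[d_x\phi]_{i+1/2,m}=(\phi_{i+1,m}-\phi_{i,m})/h_{i+1/2}$, $[d_y\phi]_{k,j+1/2}=(\phi_{k,j+1}-\phi_{k,j})/l_{j+1/2}$,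 $[D_x\phi]_{i,m}=(\phi_{i+1/2,m}-\phi_{i-1/2,m})/h_i$ for $1\le i\le n_x-1$, $[D_y\phi]_{k,j}=(\phi_{k,j+1/2}-\phi_{k,j-1/2})/l_j$ for $1\le j\le n_y-1$, and at the boundary $[D_x\phi]_{0,m}=(\phi_{1/2,m}-\phi_{0,m})/h_0$, $[D_x\phi]_{n_x,m}=(\phi_{n_x,m}-\phi_{n_x-1/2,m})/h_{n_x}$, $[D_y\phi]_{k,0}=(\phi_{k,1/2}-\phi_{k,0})/l_0$, $[D_y\phi]_{k,n_y}=(\phi_{k,n_y}-\phi_{k,n_y-1/2})/l_{n_y}$. Discrete inner products: $(\phi,\theta)_M=\sum_{i=0}^{n_x-1}\sum_{j=0}^{n_y-1}h_{i+1/2}l_{j+1/2}\phi_{i+1/2,j+1/2}\theta_{i+1/2,j+1/2}$; $(\phi,\theta)_T=\sum_{i=0}^{n_x}\sum_{j=0}^{n_y}h_il_j\phi_{i,j}\theta_{i,j}$; $(\phi,\theta)_{TM}=\sum_{i=1}^{n_x-1}\sum_{j=0}^{n_y-1}h_il_{j+1/2}\phi_{i,j+1/2}\theta_{i,j+1/2}$; $(\phi,\theta)_{MT}=\sum_{i=0}^{n_x-1}\sum_{j=1}^{n_y-1}h_{i+1/2}l_j\phi_{i+1/2,j}\theta_{i+1/2,j}$; $\|\phi\|_\xi^2=(\phi,\phi)_\xi$. A discrete stress $\underline\tau=(\tau^{11},\tau^{22},\tau^{12})$ consists of $\tau^{11},\tau^{22}$ defined at cell centers $(x_{i+1/2},y_{j+1/2})$,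 $0\le i\le n_x-1$, $0\le j\le n_y-1$, and $\tau^{12}$ defined at nodes $(x_i,y_j)$, $0\le i\le n_x$, $0\le j\le n_y$; $\|\underline\tau\|^2=\|\tau^{11}\|_M^2+\|\tau^{22}\|_M^2+\|\tau^{12}\|_T^2$. An admissible discrete displacement $\boldsymbol v=(v^x,v^y)$ consists of $v^x$ defined at the points $(x_i,y_{j+1/2})$ ($0\le i\le n_x,0\le j\le n_y-1$) and $(x_i,y_0),(x_i,y_{n_y})$ ($0\le i\le n_x$), and $v^y$ defined at $(x_{i+1/2},y_j)$ ($0\le i\le n_x-1,0\le j\le n_y$) and $(x_0,y_j),(x_{n_x},y_j)$ ($0\le j\le n_y$), such that $v^x$ and $v^y$ vanish at all of their points lying on $\partial\Omega$; $\|\boldsymbol v\|^2=\|v^x\|_{TM}^2+\|v^y\|_{MT}^2$. *)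

(* Defs.v *)
From HB Require Import structures.
From mathcomp Require Import all_boot all_order all_algebra.
From mathcomp Require Import reals.
Set Implicit Arguments. Unset Strict Implicit. Unset Printing Implicit Defensive.
Import Order.TTheory GRing.Theory Num.Theory.
Local Open Scope ring_scope.

(* A grid index alpha is an integer i (Int i) or a half-integer i+1/2 (Half i). *)
Inductive idx := Int of nat | Half of nat.

Section Grid.
Variable R : realType.

(* A discrete function: phi alpha beta = phi(x_alpha, y_beta).
   Only its values at the points where it is "defined" matter. *)
Definition dfun := idx -> idx -> R.

Definition is_grid (n : nat) (a : R) (x : nat -> R) : Prop :=
  x 0%N = 0 /\ x n = a /\ (forall i : nat, (i < n)%N -> x i < x i.+1).

Definition hhalf (x : nat -> R) (i : nat) : R := x i.+1 - x i.
Definition hnode (n : nat) (x : nat -> R) (i : nat) : R :=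
  if i == 0%N then hhalf x 0 / 2
  else if i == n then hhalf x n.-1 / 2
  else (hhalf x i.-1 + hhalf x i) / 2.

(* [d_x phi]_{i+1/2,m} ; junk (0) at integer first index *)
Definition dX (x : nat -> R) (phi : dfun) : dfun := fun al be =>
  match al with
  | Half i => (phi (Int i.+1) be - phi (Int i) be) / hhalf x i
  | Int _ => 0
  end.
Definition dY (y : nat -> R) (phi : dfun) : dfun := fun al be =>
  match be with
  | Half j => (phi al (Int j.+1) - phi al (Int j)) / hhalf y j
  | Int _ => 0
  end.
Definition DX (nx : nat) (x : nat -> R) (phi : dfun) : dfun := fun al be =>
  match al with
  | Int i =>
      if i == 0%N then (phi (Half 0) be - phi (Int 0) be) / hnode nx x 0
      else if i == nx then (phi (Int nx) be - phi (Half nx.-1) be) / hnode nx x nx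
      else (phi (Half i) be - phi (Half i.-1) be) / hnode nx x i
  | Half _ => 0
  end.
Definition DY (ny : nat) (y : nat -> R) (phi : dfun) : dfun := fun al be =>
  match be with
  | Int j =>
      if j == 0%N then (phi al (Half 0) - phi al (Int 0)) / hnode ny y 0
      else if j == ny then (phi al (Int ny) - phi al (Half ny.-1)) / hnode ny y ny
      else (phi al (Half j) - phi al (Half j.-1)) / hnode ny y j
  | Half _ => 0
  end.

Variables (nx ny : nat) (x y : nat -> R).

Definition ipM (phi th : dfun) : R :=
  \sum_(0 <= i < nx) \sum_(0 <= j < ny)
     hhalf x i * hhalf y j * phi (Half i) (Half j) * th (Half i) (Half j).
Definition ipT (phi th : dfun) : R :=
  \sum_(0 <= i < nx.+1) \sum_(0 <= j < ny.+1)
     hnode nx x i * hnode ny y j * phi (Int i) (Int j) * th (Int i) (Int j).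
Definition ipTM (phi th : dfun) : R :=
  \sum_(1 <= i < nx) \sum_(0 <= j < ny)
     hnode nx x i * hhalf y j * phi (Int i) (Half j) * th (Int i) (Half j).
Definition ipMT (phi th : dfun) : R :=
  \sum_(0 <= i < nx) \sum_(1 <= j < ny)
     hhalf x i * hnode ny y j * phi (Half i) (Int j) * th (Half i) (Int j).

(* Discrete stress: tau11, tau22 at cell centres, tau12 at nodes. *)
Record stress := Stress { t11 : dfun; t22 : dfun; t12 : dfun }.

Definition stress_nonzero (tau : stress) : Prop :=
  (exists i j, (i < nx)%N /\ (j < ny)%N /\
      (t11 tau (Half i) (Half j) <> 0 \/ t22 tau (Half i) (Half j) <> 0))
  \/ (exists i j, (i <= nx)%N /\ (j <= ny)%N /\ t12 tau (Int i) (Int j) <> 0).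

Definition stress_norm (tau : stress) : R :=
  Num.sqrt (ipM (t11 tau) (t11 tau) + ipM (t22 tau) (t22 tau)
            + ipT (t12 tau) (t12 tau)).

Record disp := Disp { vx : dfun; vy : dfun }.

(* v^x is defined at (x_i, y_{j+1/2}) and at (x_i,y_0),(x_i,y_{ny});
   v^y at (x_{i+1/2}, y_j) and at (x_0,y_j),(x_{nx},y_j).
   Admissible: both vanish at all their points lying on the boundary. *)
Definition admissible (v : disp) : Prop :=
  (forall j, (j < ny)%N -> vx v (Int 0) (Half j) = 0 /\ vx v (Int nx) (Half j) = 0)
  /\ (forall i, (i <= nx)%N -> vx v (Int i) (Int 0) = 0 /\ vx v (Int i) (Int ny) = 0)
  /\ (forall i, (i < nx)%N -> vy v (Half i) (Int 0) = 0 /\ vy v (Half i) (Int ny) = 0)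
  /\ (forall j, (j <= ny)%N -> vy v (Int 0) (Int j) = 0 /\ vy v (Int nx) (Int j) = 0).

Definition disp_norm (v : disp) : R :=
  Num.sqrt (ipTM (vx v) (vx v) + ipMT (vy v) (vy v)).

Definition bform (tau : stress) (v : disp) : R :=
  ipTM (fun al be => DX nx x (t11 tau) al be + dY y (t12 tau) al be) (vx v)
  + ipMT (fun al be => dX x (t12 tau) al be + DY ny y (t22 tau) al be) (vy v).

End Grid.

(* Main.v *)
Require Import Defs.
From HB Require Import structures.
From mathcomp Require Import all_boot all_order all_algebra.
From mathcomp Require Import reals.
From mathcomp Require Import ring lra.
From Stdlib Require Import Classical.
Import Order.TTheory GRing.Theory Num.Theory.
Local Open Scope ring_scope.

Set Implicit Arguments. Unset Strict Implicit.


Lemma abel (R : realType) (n : nat) (g V : nat -> R) : (0 < n)%N -> V 0%N = 0 -> V n = 0 ->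
  \sum_(1 <= i < n) (g i.-1 - g i) * V i = \sum_(0 <= k < n) g k * (V k.+1 - V k).
Proof.
move=> n0 V0 Vn.
suff H : forall m, \sum_(1 <= i < m.+1) (g i.-1 - g i) * V i =
   \sum_(0 <= k < m.+1) g k * (V k.+1 - V k) + g 0%N * V 0%N - g m * V m.+1.
  case: n n0 Vn => // m _ Vm; rewrite H Vm V0; ring.
elim=> [|m IH]; first by rewrite big_geq // big_nat1 /=; ring.
rewrite big_nat_recr // [in RHS]big_nat_recr //= IH /=; ring.
Qed.

Lemma grid_pos (R : realType) n (a : R) x : is_grid n a x -> forall k, (k < n)%N -> 0 < hhalf x k.
Proof. by case=> _ [_ H] k hk; rewrite /hhalf subr_gt0 H. Qed.

Lemma sum_hhalf (R : realType) (x : nat -> R) i : \sum_(0 <= k < i) hhalf x k = x i - x 0%N.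
Proof. by rewrite telescope_sumr. Qed.

Lemma grid_bounds (R : realType) n (a : R) x : is_grid n a x -> forall i, (i <= n)%N -> 0 <= x i <= a.
Proof.
move=> G i hi; have [x0 [xn _]] := G.
have P : forall m p, (m <= p <= n)%N -> x m <= x p.
  move=> m p /andP[hmp hpn]; rewrite -subr_ge0 -telescope_sumr //.
  rewrite big_nat_cond; apply: sumr_ge0 => k /andP[/andP[_ hk] _].
  by have := grid_pos G (leq_trans hk hpn); rewrite /hhalf => /ltW.
by apply/andP; split; [rewrite -x0 | rewrite -xn]; apply: P; rewrite ?hi ?leqnn.
Qed.

Lemma cs_sum (R : realType) (m : nat) (h e : nat -> R) : (forall k, (k < m)%N -> 0 < h k) ->
  (\sum_(0<=k<m) h k * e k)^+2 <= (\sum_(0<=k<m) h k) * (\sum_(0<=k<m) h k * e k ^+ 2).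
Proof.
elim: m => [|m IH] hp; first by rewrite !big_geq // expr0n mul0r.
have IH' := IH (fun k hk => hp k (ltnW hk)).
have H0 : 0 <= \sum_(0<=k<m) h k.
  rewrite big_nat_cond; apply: sumr_ge0 => k /andP[/andP[_ hk] _]; exact: ltW (hp k (ltnW hk)).
have Q0 : 0 <= \sum_(0<=k<m) h k * e k ^+ 2.
  rewrite big_nat_cond; apply: sumr_ge0 => k /andP[/andP[_ hk] _].
  by rewrite mulr_ge0 ?sqr_ge0 // ltW // hp // ltnW.
have hm := hp m (ltnSn m).
rewrite !big_nat_recr //=.
move: IH' H0 Q0 hm; set S := \sum_(0<=k<m) _; set H := \sum_(0<=k<m) _; set Q := \sum_(0<=k<m) _.
move=> IH' H0 Q0 hm.
set hh := h m; set ee := e m.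
have key : 0 <= H * ee ^+ 2 - 2 * S * ee + Q.
  have [Hz|Hp] := eqVneq H 0.
    have : S ^+ 2 <= 0 by rewrite Hz mul0r in IH'.
    rewrite Hz; nra.
  have Hpos : 0 < H by rewrite lt_def Hp H0.
  rewrite -(pmulr_rge0 _ Hpos).
  have -> : H * (H * ee ^+ 2 - 2 * S * ee + Q) = (H * ee - S)^+2 + (H * Q - S ^+ 2) by ring.
  by rewrite addr_ge0 ?sqr_ge0 // subr_ge0.
rewrite -subr_ge0.
have -> : (H + hh) * (Q + hh * ee ^+ 2) - (S + hh * ee) ^+ 2 =
  (H * Q - S ^+ 2) + hh * (H * ee ^+ 2 - 2 * S * ee + Q) by ring.
by rewrite addr_ge0 // ?subr_ge0 // mulr_ge0 // ltW.
Qed.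


Lemma hnode_sum (R : realType) n (x : nat -> R) : (0 < n)%N ->
  \sum_(1 <= i < n) hnode n x i = (x n + x n.-1 - x 1%N - x 0%N) / 2.
Proof.
move=> n0.
rewrite (eq_big_nat _ _ (F2 := fun i => (x i.+1 - x i.-1) / 2)); last first.
  move=> i /andP[h1 h2]; rewrite /hnode /hhalf.
  rewrite (negbTE (lt0n_neq0 h1)) (ltn_eqF h2) prednK //; ring.
case: n n0 => // m _ /=.
elim: m => [|m IH]; first by rewrite big_geq //=; ring.
rewrite big_nat_recr //= IH; ring.
Qed.

Lemma sub_range (R : realType) (F : nat -> R) i n : (i <= n)%N ->
  (forall k, (k < n)%N -> 0 <= F k) -> \sum_(0 <= k < i) F k <= \sum_(0 <= k < n) F k.
Proof.
move=> hin hF; rewrite [X in _ <= X](@big_cat_nat _ _ _ i) //= lerDl.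
rewrite big_nat_cond; apply: sumr_ge0 => k /andP[/andP[_ hk] _]; exact: hF.
Qed.

Lemma poinc (R : realType) n (a : R) x (V : nat -> R) : is_grid n a x -> V 0%N = 0 -> (0 < n)%N ->
  \sum_(1<=i<n) hnode n x i * V i * V i <=
  a ^+ 2 * \sum_(0<=k<n) hhalf x k * ((V k.+1 - V k)/hhalf x k) * ((V k.+1 - V k)/hhalf x k).
Proof.
move=> G V0 n0.
have hp := grid_pos G.
have hb := grid_bounds G.
set e := fun k => (V k.+1 - V k) / hhalf x k.
set Q := \sum_(0<=k<n) _.
have hQ : forall k, (k < n)%N -> 0 <= hhalf x k * e k ^+ 2.
  by move=> k hk; rewrite mulr_ge0 ?sqr_ge0 // ltW // hp.
have QE : Q = \sum_(0<=k<n) hhalf x k * e k ^+ 2.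
  by rewrite /Q; apply: eq_bigr => k _; rewrite /e expr2 [RHS]mulrA.
have Q0 : 0 <= Q by rewrite QE big_nat_cond; apply: sumr_ge0 => k /andP[/andP[_ hk] _]; exact: hQ.
have a0 : 0 <= a by have /andP[h1 h2] := hb n (leqnn n); exact: le_trans h1 h2.
have Vi : forall i, (i <= n)%N -> V i = \sum_(0<=k<i) hhalf x k * e k.
  move=> i hi; rewrite (eq_big_nat _ _ (F2 := fun k => V k.+1 - V k)).
    by rewrite telescope_sumr // V0 subr0.
  move=> k /andP[_ hk]; rewrite /e mulrC -mulrA mulVf ?mulr1 //.
  by apply: lt0r_neq0; apply: hp; apply: leq_trans hi.
have Vi2 : forall i, (i <= n)%N -> V i * V i <= a * Q.
  move=> i hi; rewrite -expr2 (Vi i hi).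
  apply: (le_trans (@cs_sum R i (hhalf x) e (fun k hk => hp k (leq_trans hk hi)))).
  apply: ler_pM.
  - by rewrite big_nat_cond; apply: sumr_ge0 => k /andP[/andP[_ hk] _]; apply: ltW; apply: hp; apply: leq_trans hi.
  - by rewrite big_nat_cond; apply: sumr_ge0 => k /andP[/andP[_ hk] _]; apply: hQ; apply: leq_trans hi.
  - by rewrite sum_hhalf; case: G => -> _; rewrite subr0; have /andP[] := hb i hi.
  - by rewrite QE; apply: sub_range.
have hn0 : forall i, (1 <= i < n)%N -> 0 <= hnode n x i.
  move=> i /andP[h1 h2]; rewrite /hnode (negbTE (lt0n_neq0 h1)) (ltn_eqF h2).
  rewrite divr_ge0 // addr_ge0 // ltW // hp //; last by apply: leq_ltn_trans h2; apply: leq_pred.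
apply: le_trans (_ : \sum_(1<=i<n) hnode n x i * (a * Q) <= _).
  rewrite big_nat_cond [X in _ <= X]big_nat_cond; apply: ler_sum => i /andP[hi _].
  rewrite -mulrA ler_wpM2l ?hn0 //; apply: Vi2; case/andP: hi => _ /ltnW //.
rewrite -mulr_suml hnode_sum // expr2 -mulrA [X in _ <= X]mulrC.
have [x0 [xn _]] := G.
have /andP[h1 _] := hb 1%N n0.
have /andP[_ h2] := hb n.-1 (leq_pred n).
rewrite xn x0.
have aQ : 0 <= a * Q by rewrite mulr_ge0.
have hs : (a + x n.-1 - x 1%N - 0) * 2^-1 <= a by lra.
rewrite mulrA; apply: le_trans (ler_wpM2r aQ hs) _; rewrite le_eqVlt; apply/orP; left; apply/eqP; ring.
Qed.


Lemma hnode_pos (R : realType) n (a : R) x : is_grid n a x -> forall i, (1 <= i < n)%N -> 0 < hnode n x i.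
Proof.
move=> G i /andP[h1 h2]; rewrite /hnode (negbTE (lt0n_neq0 h1)) (ltn_eqF h2).
rewrite divr_gt0 // addr_gt0 // (grid_pos G) //.
by apply: leq_ltn_trans h2; apply: leq_pred.
Qed.

Lemma partTM (R : realType) nx ny (a : R) x y (V : dfun R) : is_grid nx a x -> (0 < nx)%N ->
  (forall j, (j < ny)%N -> V (Int 0) (Half j) = 0 /\ V (Int nx) (Half j) = 0) ->
  ipTM nx ny x y (fun al be => DX nx x (fun a b => - dX x V a b) al be + dY y (fun _ _ => 0) al be) V
  = ipM nx ny x y (dX x V) (dX x V).
Proof.
move=> G n0 HV; rewrite /ipTM /ipM exchange_big_nat [RHS]exchange_big_nat.
apply: eq_big_nat => j /andP[_ hj].
pose Gf := fun k => dX x V (Half k) (Half j).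
pose W := fun k => V (Int k) (Half j).
rewrite (eq_big_nat _ _ (F2 := fun i => hhalf y j * ((Gf i.-1 - Gf i) * W i))); last first.
  move=> i hi; have hn := hnode_pos G hi; case/andP: hi => h1 h2.
  have hx1 := grid_pos G h2.
  have hx2 : 0 < hhalf x i.-1 by apply: (grid_pos G); apply: leq_ltn_trans h2; apply: leq_pred.
  rewrite /DX /dY /Gf /W /= (negbTE (lt0n_neq0 h1)) (ltn_eqF h2) subrr mul0r addr0.
  field; rewrite ?lt0r_neq0 //.
rewrite -mulr_sumr (@abel _ nx Gf W n0) /W; last 2 first.
  - by case: (HV j hj).
  - by case: (HV j hj).
rewrite [RHS](eq_big_nat _ _ (F2 := fun i => hhalf y j * (hhalf x i * dX x V (Half i) (Half j) * dX x V (Half i) (Half j)))); last first.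
  by move=> i _; ring.
rewrite -mulr_sumr; congr (_ * _); apply: eq_big_nat => k /andP[_ hk].
have hx := grid_pos G hk.
rewrite /Gf /=; field; rewrite lt0r_neq0 //.
Qed.

Lemma partMT (R : realType) nx ny (b : R) x y (W : dfun R) : is_grid ny b y -> (0 < ny)%N ->
  (forall i, (i < nx)%N -> W (Half i) (Int 0) = 0 /\ W (Half i) (Int ny) = 0) ->
  ipMT nx ny x y (fun al be => dX x (fun _ _ => 0) al be + DY ny y (fun a b => - dY y W a b) al be) W
  = ipM nx ny x y (dY y W) (dY y W).
Proof.
move=> G n0 HW; rewrite /ipMT /ipM.
apply: eq_big_nat => i /andP[_ hi].
pose Gf := fun k => dY y W (Half i) (Half k).
pose U := fun k => W (Half i) (Int k).
rewrite (eq_big_nat _ _ (F2 := fun j => hhalf x i * ((Gf j.-1 - Gf j) * U j))); last first.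
  move=> j hj; have hn := hnode_pos G hj; case/andP: hj => h1 h2.
  have hy1 := grid_pos G h2.
  have hy2 : 0 < hhalf y j.-1 by apply: (grid_pos G); apply: leq_ltn_trans h2; apply: leq_pred.
  rewrite /DY /dX /Gf /U /= (negbTE (lt0n_neq0 h1)) (ltn_eqF h2) subrr mul0r add0r.
  field; rewrite ?lt0r_neq0 //.
rewrite -mulr_sumr (@abel _ ny Gf U n0) /U; last 2 first.
  - by case: (HW i hi).
  - by case: (HW i hi).
rewrite [RHS](eq_big_nat _ _ (F2 := fun j => hhalf x i * (hhalf y j * dY y W (Half i) (Half j) * dY y W (Half i) (Half j)))); last first.
  by move=> j _; ring.
rewrite -mulr_sumr; congr (_ * _); apply: eq_big_nat => k /andP[_ hk].
have hy := grid_pos G hk.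
rewrite /Gf /=; field; rewrite lt0r_neq0 //.
Qed.


Lemma TMbound (R : realType) nx ny (a b : R) x y (V : dfun R) : is_grid nx a x -> is_grid ny b y -> (0 < nx)%N ->
  (forall j, (j < ny)%N -> V (Int 0) (Half j) = 0) ->
  ipTM nx ny x y V V <= a ^+ 2 * ipM nx ny x y (dX x V) (dX x V).
Proof.
move=> Gx Gy n0 HV; rewrite /ipTM /ipM exchange_big_nat [in X in _ <= X]exchange_big_nat mulr_sumr.
apply: ler_sum_nat => j /andP[_ hj].
have hy := grid_pos Gy hj.
rewrite (eq_big_nat _ _ (F2 := fun i => hhalf y j * (hnode nx x i * V (Int i) (Half j) * V (Int i) (Half j)))); last by move=> i _; ring.
rewrite [in X in _ <= X](eq_big_nat _ _ (F2 := fun i => hhalf y j * (hhalf x i * dX x V (Half i) (Half j) * dX x V (Half i) (Half j)))); last by move=> i _; ring.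
rewrite -!mulr_sumr mulrCA; apply: ler_wpM2l; first exact: ltW.
have := poinc (V := fun k => V (Int k) (Half j)) Gx (HV j hj) n0; cbv beta; exact.
Qed.

Lemma MTbound (R : realType) nx ny (a b : R) x y (W : dfun R) : is_grid nx a x -> is_grid ny b y -> (0 < ny)%N ->
  (forall i, (i < nx)%N -> W (Half i) (Int 0) = 0) ->
  ipMT nx ny x y W W <= b ^+ 2 * ipM nx ny x y (dY y W) (dY y W).
Proof.
move=> Gx Gy n0 HW; rewrite /ipMT /ipM mulr_sumr.
apply: ler_sum_nat => i /andP[_ hi].
have hx := grid_pos Gx hi.
rewrite (eq_big_nat _ _ (F2 := fun j => hhalf x i * (hnode ny y j * W (Half i) (Int j) * W (Half i) (Int j)))); last by move=> j _; ring.
rewrite [in X in _ <= X](eq_big_nat _ _ (F2 := fun j => hhalf x i * (hhalf y j * dY y W (Half i) (Half j) * dY y W (Half i) (Half j)))); last by move=> j _; ring.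
rewrite -!mulr_sumr mulrCA; apply: ler_wpM2l; first exact: ltW.
have := poinc (V := fun k => W (Half i) (Int k)) Gy (HW i hi) n0; cbv beta; exact.
Qed.

Lemma ipM_ge0 (R : realType) nx ny (a b : R) x y (f : dfun R) : is_grid nx a x -> is_grid ny b y ->
  0 <= ipM nx ny x y f f.
Proof.
move=> Gx Gy; rewrite /ipM big_nat_cond; apply: sumr_ge0 => i /andP[/andP[_ hi] _].
rewrite big_nat_cond; apply: sumr_ge0 => j /andP[/andP[_ hj] _].
have h1 := grid_pos Gx hi; have h2 := grid_pos Gy hj.
rewrite -mulrA; apply: mulr_ge0; [apply: mulr_ge0; exact: ltW | rewrite -expr2; exact: sqr_ge0].
Qed.


Unset Implicit Arguments. Set Strict Implicit.

Theorem lemma3p1 (R : realType) (a b : R) :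
  0 < a -> 0 < b ->
  exists beta : R, 0 < beta /\
    forall (nx ny : nat) (x y : nat -> R),
      (0 < nx)%N -> (0 < ny)%N ->
      is_grid nx a x -> is_grid ny b y ->
      forall v : disp R, admissible nx ny v ->
      forall M : R,
        (forall tau : stress R, stress_nonzero nx ny tau ->
           bform nx ny x y tau v / stress_norm nx ny x y tau <= M) ->
        beta * disp_norm nx ny x y v <= M.
Proof.
move=> a0 b0; exists (a + b)^-1; split; first by rewrite invr_gt0 addr_gt0.
move=> nx ny x y nx0 ny0 Gx Gy v [Hx1 [Hx2 [Hy1 Hy2]]] M HM.
pose A := ipM nx ny x y (dX x (vx v)) (dX x (vx v)).
pose B := ipM nx ny x y (dY y (vy v)) (dY y (vy v)).
have A0 : 0 <= A by apply: (ipM_ge0 _ Gx Gy).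
have B0 : 0 <= B by apply: (ipM_ge0 _ Gx Gy).
have TA : ipTM nx ny x y (vx v) (vx v) <= a ^+ 2 * A.
  by apply: (TMbound Gx Gy nx0) => j hj; case: (Hx1 j hj).
have TB : ipMT nx ny x y (vy v) (vy v) <= b ^+ 2 * B.
  by apply: (MTbound Gx Gy ny0) => i hi; case: (Hy1 i hi).
have ab0 : 0 < a + b by rewrite addr_gt0.
have bound : (a + b)^-1 * disp_norm nx ny x y v <= Num.sqrt (A + B).
  rewrite /disp_norm ler_pdivrMl //.
  have -> : (a + b) * Num.sqrt (A + B) = Num.sqrt ((a + b) ^+ 2 * (A + B)).
    by rewrite sqrtrM ?sqr_ge0 // sqrtr_sqr ger0_norm // ltW.
  rewrite ler_sqrt; last by rewrite mulr_ge0 ?sqr_ge0 ?addr_ge0.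
  apply: le_trans (lerD TA TB) _.
  have a2 : a ^+ 2 <= (a + b) ^+ 2 by nra.
  have b2 : b ^+ 2 <= (a + b) ^+ 2 by nra.
  rewrite mulrDr; apply: lerD; apply: ler_wpM2r => //.
apply: le_trans bound _.
have [AB0|ABp] := eqVneq (A + B) 0.
- rewrite AB0 sqrtr0.
  pose tau0 := Stress (fun _ _ => (0:R)) (fun _ _ => 0) (fun _ _ => 1).
  have nz : stress_nonzero nx ny tau0.
    by right; exists 0%N, 0%N; split => //; split => //=; apply/eqP; rewrite oner_eq0.
  have := HM tau0 nz.
  suff -> : bform nx ny x y tau0 v = 0 by rewrite mul0r.
  rewrite /bform /ipTM /ipMT /=.
  rewrite big1; last by move=> i _; rewrite big1 // => j _; rewrite /DX /dY subrr !mul0r;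
    repeat case: ifP => _; rewrite subrr !mul0r ?addr0 ?mulr0 ?mul0r.
  rewrite add0r big1 // => i _; rewrite big1 // => j _; rewrite /DY /dX subrr !mul0r.
  by repeat case: ifP => _; rewrite subrr !mul0r ?addr0 ?mulr0 ?mul0r.
- have ABp' : 0 < A + B by rewrite lt_def ABp addr_ge0.
  pose tau := Stress (fun al be => - dX x (vx v) al be) (fun al be => - dY y (vy v) al be) (fun _ _ => 0).
  have bf : bform nx ny x y tau v = A + B.
    rewrite /bform /=.
    rewrite (@partTM R nx ny a x y (vx v) Gx nx0); last by move=> j hj; case: (Hx1 j hj).
    rewrite (@partMT R nx ny b x y (vy v) Gy ny0) //; by move=> i hi; case: (Hy1 i hi).
  have sn : stress_norm nx ny x y tau = Num.sqrt (A + B).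
    rewrite /stress_norm /=; congr Num.sqrt.
    have -> : ipT nx ny x y (fun _ _ => 0) (fun _ _ => 0) = 0.
      by rewrite /ipT big1 // => i _; rewrite big1 // => j _; rewrite mulr0.
    rewrite addr0 /ipM /A /B /ipM; congr (_ + _); apply: eq_bigr => i _; apply: eq_bigr => j _;
      ring.
  have nz : stress_nonzero nx ny tau.
    apply: NNPP => Hn; move: ABp; rewrite /A /B /ipM.
    suff [-> ->] : (\sum_(0 <= i < nx) \sum_(0 <= j < ny)
         hhalf x i * hhalf y j * dX x (vx v) (Half i) (Half j) * dX x (vx v) (Half i) (Half j) = 0) /\
       (\sum_(0 <= i < nx) \sum_(0 <= j < ny)
         hhalf x i * hhalf y j * dY y (vy v) (Half i) (Half j) * dY y (vy v) (Half i) (Half j) = 0).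
      by rewrite addr0 eqxx.
    have Z : forall i j, (i < nx)%N -> (j < ny)%N ->
        dX x (vx v) (Half i) (Half j) = 0 /\ dY y (vy v) (Half i) (Half j) = 0.
      move=> i j hi hj; split; apply: NNPP => hne; apply: Hn; left; exists i, j; do 2 split => //=.
      + by left; apply/eqP; rewrite oppr_eq0; apply/eqP.
      + by right; apply/eqP; rewrite oppr_eq0; apply/eqP.
    split; rewrite big_nat_cond big1 // => i /andP[/andP[_ hi] _];
      rewrite big_nat_cond big1 // => j /andP[/andP[_ hj] _]; have [Z1 Z2] := Z i j hi hj.
    + by rewrite Z1 mulr0.
    + by rewrite Z2 mulr0.
  have := HM tau nz; rewrite bf sn.
  have sp : 0 < Num.sqrt (A + B) by rewrite sqrtr_gt0.
  by rewrite -{1}(sqr_sqrtr (ltW ABp')) expr2 mulfK // lt0r_neq0.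
Qed.
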